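(* Let $\Sigma$ be a finite nonempty alphabet, $L\subseteq\Sigma^*$ and $\kappa(L)=n\ge 1$. If $L$ is a right ideal or a prefix-closed language, then $\sigma(L)\le n^{n-1}$. This bound is tight: for $n=1$ whenever $|\Sigma|\ge 1$, for $n=2$ whenever $|\Sigma|\ge 2$, for $n=3$ whenever $|\Sigma|\ge 3$, and for $n\ge 4$ whenever $|\Sigma|\ge 4$, there is a language $L$ over $\Sigma$ of the respective type with $\kappa(L)=n$ and $\sigma(L)=n^{n-1}$. Moreover, these alphabet sizes cannot be reduced: over a smaller alphabet no such language with $\kappa(L)=n$ attains $\sigma(L)=n^{n-1}$.
   Context: For a language $L\subseteq\Sigma^*$ and $w\in\Sigma^*$, the (left) quotient is $w^{-1}L=\{x\in\Sigma^*: wx\in L\}$; the quotient complexity $\kappa(L)$ is the number of distinct quotients of $L$ (equal to the number of states of a minimal DFA of $L$). The syntactic congruence of $L$ is $x\approx_L y$ iff for all $u,v\in\Sigma^*$, $uxv\in L\Leftrightarrow uyv\in L$; the syntactic semigroup is $\Sigma^+/\approx_L$, and the syntactic complexity $\sigma(L)$ is its cardinality (equivalently, the number of transformations of the state set of a minimal DFA of $L$ induced by nonempty words). A language $L$ is a right ideal if it is nonempty and $L=L\Sigma^*$. It is prefix-closed if $w\in L$ implies every prefix of $w$ is in $L$. *)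

(* Defs.v *)
From mathcomp Require Import all_boot.
Set Implicit Arguments. Unset Strict Implicit. Unset Printing Implicit Defensive.

Definition lang (S : finType) := seq S -> Prop.

Definition quot (S : finType) (w : seq S) (L : lang S) : lang S :=
  fun x => L (w ++ x).

Definition lang_eq (S : finType) (L1 L2 : lang S) : Prop :=
  forall x, L1 x <-> L2 x.

Definition kappa (S : finType) (L : lang S) (n : nat) : Prop :=
  exists f : 'I_n -> seq S,
    (forall i j, lang_eq (quot (f i) L) (quot (f j) L) -> i = j) /\
    (forall w, exists i, lang_eq (quot w L) (quot (f i) L)).

Definition synt_eq (S : finType) (L : lang S) (x y : seq S) : Prop :=
  forall u v, L (u ++ x ++ v) <-> L (u ++ y ++ v).

(* sigma L = m : the syntactic semigroup Sigma^+ / ~_L has exactly m elements. *)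
Definition sigma (S : finType) (L : lang S) (m : nat) : Prop :=
  exists g : 'I_m -> seq S,
    (forall i, g i <> [::]) /\
    (forall i j, synt_eq L (g i) (g j) -> i = j) /\
    (forall w, w <> [::] -> exists i, synt_eq L w (g i)).

Definition right_ideal (S : finType) (L : lang S) : Prop :=
  (exists w, L w) /\ lang_eq L (fun w => exists u v, w = u ++ v /\ L u).

Definition prefix_closed (S : finType) (L : lang S) : Prop :=
  forall w x, L (w ++ x) -> L w.

(* Main.v *)
Require Import Defs.
From mathcomp Require Import all_boot all_fingroup all_algebra.
From Stdlib Require Import Classical ClassicalEpsilon.
Set Implicit Arguments. Unset Strict Implicit. Unset Printing Implicit Defensive.

Definition cb (P : Prop) : bool :=
  if excluded_middle_informative P then true else false.
Lemma cbP P : reflect P (cb P).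
Proof. by rewrite /cb; case: excluded_middle_informative => h; constructor. Qed.

Section Sig.
Variables (S : finType) (L : lang S) (R : finType) (Phi : seq S -> R).
Hypothesis HPhi : forall x y, synt_eq L x y <-> Phi x = Phi y.
Definition Img := [set r | cb (exists x, x <> [::] /\ Phi x = r)].

Lemma sigma_card m : sigma L m -> m = #|Img|.
Proof.
case=> g [gne [ginj gsur]].
have hinj : injective (fun i => Phi (g i)).
  by move=> i j /HPhi; apply: ginj.
have -> : Img = [set Phi (g i) | i in 'I_m].
  apply/setP=> r; rewrite inE; apply/cbP/imsetP.
    move=> [x [xne <-]]; have [i hi] := gsur x xne; exists i => //.
    exact/HPhi.
  by move=> [i _ ->]; exists (g i).
by rewrite card_imset // card_ord.
Qed.

Definition word_of (r : R) : seq S :=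
  match excluded_middle_informative (exists x, x <> [::] /\ Phi x = r) with
  | left e => proj1_sig (constructive_indefinite_description _ e)
  | right _ => [::] end.

Lemma word_ofP r : r \in Img -> word_of r <> [::] /\ Phi (word_of r) = r.
Proof.
rewrite inE /word_of => /cbP h; case: excluded_middle_informative => // e.
by case: constructive_indefinite_description.
Qed.

Lemma sigma_of_card : sigma L #|Img|.
Proof.
exists (fun i => word_of (enum_val i)); split; [|split].
- by move=> i; case: (word_ofP (enum_valP i)).
- move=> i j /HPhi; rewrite (word_ofP (enum_valP i)).2 (word_ofP (enum_valP j)).2.
  exact: enum_val_inj.
- move=> w wne; have wI : Phi w \in Img by rewrite inE; apply/cbP; exists w.
  exists (enum_rank_in wI (Phi w)); apply/HPhi.
  by rewrite (word_ofP (enum_valP _)).2 enum_rankK_in.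
Qed.
End Sig.

Lemma card_fix (Q : finType) (z : Q) :
  #|[set t : {ffun Q -> Q} | t z == z]| = #|Q| ^ #|Q|.-1.
Proof.
pose K := {x : Q | x != z}.
pose res (t : {ffun Q -> Q}) : {ffun K -> Q} := [ffun x => t (val x)].
have rinj : {in [set t : {ffun Q -> Q} | t z == z] &, injective res}.
  move=> t1 t2; rewrite !inE => /eqP h1 /eqP h2 e; apply/ffunP => x.
  have [->|xz] := eqVneq x z; first by rewrite h1 h2.
  by have := congr1 (fun f : {ffun K -> Q} => f (exist _ x xz)) e; rewrite !ffunE.
rewrite -(card_in_imset rinj).
have -> : res @: [set t : {ffun Q -> Q} | t z == z] = setT.
  apply/setP=> g; rewrite inE; apply/imsetP.
  exists [ffun x => if insub x is Some y then g y else z].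
    by rewrite inE ffunE insubN ?negbK.
  apply/ffunP => x; rewrite !ffunE; case: x => x xz /=.
  by rewrite insubT /=; congr (g _); apply/val_inj.
rewrite cardsT card_ffun card_sig; congr (_ ^ _).
by rewrite -(cardC1 z); apply: eq_card => x; rewrite !inE.
Qed.

Section Letters.
Variables (S Q : finType) (z : Q) (T : seq S -> Q -> Q).
Hypothesis HTnil : forall q, T [::] q = q.
Hypothesis HTcat : forall x y q, T (x ++ y) q = T y (T x q).
Hypothesis HTz : forall x, T x z = z.
Hypothesis Hall : forall h : Q -> Q, h z = z ->
  exists x, x <> [::] /\ forall q, T x q = h q.

Let ta a := T [:: a].
Lemma Tcons a x q : T (a :: x) q = T x (ta a q).
Proof. by rewrite -cat1s HTcat. Qed.

Definition tot (g : Q -> Q) := forall q, q != z -> g q != z.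

Lemma tot_word x : (forall a, a \in x -> tot (ta a)) -> tot (T x).
Proof.
elim: x => [|a x IH] h q qz; first by rewrite HTnil.
rewrite Tcons; apply: IH; last by apply: h; rewrite ?inE ?eqxx.
by move=> b bx; apply: h; rewrite inE bx orbT.
Qed.

Lemma inj_word x : (forall a, a \in x -> injective (ta a)) -> injective (T x).
Proof.
elim: x => [|a x IH] h p q; first by rewrite !HTnil.
rewrite !Tcons => /IH e; apply: (h a); rewrite ?inE ?eqxx //; apply: e.
by move=> b bx; apply: h; rewrite inE bx orbT.
Qed.

Lemma word_inj x : injective (T x) -> forall a, a \in x -> injective (ta a).
Proof.
elim: x => [|a x IH] hi b //; rewrite inE => /orP [/eqP ->|bx].
  by move=> p q e; apply: hi; rewrite !Tcons e.
apply: IH bx => p q e.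
have ia : injective (ta a) by move=> p' q' e'; apply: hi; rewrite !Tcons e'.
have [g ga ag] := injF_bij ia.
by apply: (can_inj ag); apply: hi; rewrite !Tcons !ag.
Qed.

Lemma tot_split x : tot (T x) ->
  (forall a, a \in x -> injective (ta a)) \/
  exists2 b, b \in x & tot (ta b) /\ ~ injective (ta b).
Proof.
elim: x => [|a x IH] ht; first by left.
have taz : ta a z = z by apply: HTz.
have [ia|nia] := (classic (injective (ta a))); last first.
  right; exists a; rewrite ?inE ?eqxx //; split => // q qz.
  apply: contra (ht q qz); rewrite Tcons => /eqP ->; by rewrite HTz.
have [g ga ag] := injF_bij ia.
have htx : tot (T x).
  move=> q qz; have : g q != z.
    by apply: contra qz => /eqP e; rewrite -(ag q) e taz.
  by move/ht; rewrite Tcons ag.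
case: (IH htx) => [h|[b bx hb]].
  left=> b; rewrite inE => /orP [/eqP ->|]; [exact: ia|exact: h].
by right; exists b; rewrite ?inE ?bx ?orbT.
Qed.

Lemma card_ge (s : seq S) : uniq s -> size s <= #|S|.
Proof. by move=> us; rewrite cardE; apply: uniq_leq_size => // x; rewrite mem_enum. Qed.

Lemma letters_bound : 2 <= #|Q| -> minn #|Q| 4 <= #|S|.
Proof.
move=> Q2.
pose E := enum [pred q | q != z].
have sE : size E = #|Q|.-1.
  by rewrite -cardE -(cardC1 z); apply: eq_card => q; rewrite !inE.
have uE : uniq E by apply: enum_uniq.
have Ein i : i < size E -> nth z E i != z.
  by move=> hi; have := mem_nth z hi; rewrite mem_enum.
have Eneq i j : i < size E -> j < size E -> i != j -> nth z E i != nth z E j.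
  by move=> hi hj; rewrite nth_uniq.
have [x0 [x0ne hx0]] := Hall (h:=id) erefl.
case: x0 x0ne hx0 => [//|a x0] _ hx0.
have ia : injective (ta a).
  by move=> p q e; rewrite -(hx0 p) -(hx0 q) !Tcons e.
have taz b : ta b z = z by apply: HTz.
have E0 : 0 < size E by rewrite sE; case: #|Q| Q2 => [|[|]].
have [x1 [_ hx1]] := Hall (h:=fun _ => z) erefl.
have [c _ [q [qz cq]]] : exists2 c, c \in x1 & exists q, q != z /\ ta c q = z.
  apply: NNPP => hn.
  have : tot (T x1).
    apply: tot_word => b bx q qz; apply/eqP => e; apply: hn; exists b => //.
    by exists q; split.
  by move/(_ _ (Ein 0 E0)); rewrite hx1 eqxx.
have nic : ~ injective (ta c).
  by move=> ic; move/eqP: qz; apply; apply: ic; rewrite cq taz.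
have ac : a != c by apply/eqP => e; apply: nic; rewrite -e.
case: (ltngtP #|Q| 2) => [|Q3|Q2e]; first by rewrite ltnNge Q2.
  2: by rewrite Q2e; have := card_ge (s:=[:: a; c]); rewrite /= inE ac; apply.
have E1 : 1 < size E by rewrite sE; case: #|Q| Q3 => [|[|[|]]].
pose q1 := nth z E 0; pose q2 := nth z E 1.
case: (Hall (h:=fun q => if q == z then z else q1)) => [|x2 [_ hx2]].
  by rewrite eqxx.
case: (tot_split (x:=x2)) => [|hi|[b _ [tb nib]]].
- move=> q' q'z; rewrite hx2 (negbTE q'z); exact: Ein.
- have := inj_word hi; move=> ij; have := Eneq 0 1 (ltnW E1) E1 erefl.
  by rewrite -/q1 -/q2 (ij q1 q2) ?eqxx // !hx2 (negbTE (Ein 0 _)) ?(negbTE (Ein 1 _)).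
have ab : a != b by apply/eqP => e; apply: nib; rewrite -e.
have bc : b != c by apply/eqP => e; move: (tb q qz); rewrite e cq eqxx.
case: (ltngtP #|Q| 3) => [|Q4|Q3e]; first by rewrite ltnNge Q3.
  2: by rewrite Q3e; apply: (card_ge (s:=[:: a; b; c])); rewrite /= !inE negb_or ab ac bc.
have E2 : 2 < size E by rewrite sE; case: #|Q| Q4 => [|[|[|[|]]]].
pose p := nth z E 0; pose q' := nth z E 1; pose r := nth z E 2.
have pz : p != z by apply: Ein; apply: leq_ltn_trans E2.
have q'z : q' != z by apply: Ein; apply: ltn_trans E2.
have rz : r != z by apply: Ein.
have pq : p != q' by apply: Eneq => //; apply: ltn_trans E2.
have pr : p != r by apply: Eneq => //; apply: leq_ltn_trans E2.
have q'r : q' != r by apply: Eneq => //; apply: ltn_trans E2.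
have [a' ia' aa'] : exists2 a', injective (ta a') & a' != a.
  apply: NNPP => hn.
  have one d : injective (ta d) -> d = a.
    move=> id; apply: NNPP => nd; apply: hn; exists d => //; exact/eqP.
  have word u v : u != z -> v != z -> exists m, forall s, T (nseq m a) s = tperm u v s.
    move=> uz vz; case: (Hall (h:=fun s => tperm u v s)).
      by rewrite tpermD // eq_sym.
    move=> x [_ hx]; exists (size x) => s; rewrite -hx; congr (T _ s).
    apply/esym/all_pred1P/allP => d dx /=; apply/eqP; apply: one.
    apply: (word_inj (x:=x)) dx => s1 s2; rewrite !hx; exact: perm_inj.
  have [m1 h1] := word p q' pz q'z.
  have [m2 h2] := word q' r q'z rz.
  have := congr1 (fun w => T w p) (esym (nseqD m1 m2 a)).
  rewrite addnC nseqD !HTcat !h1 !h2 !tpermL (tpermD (x:=q') (y:=r)) 1?eq_sym // tpermL.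
  by move=> /eqP; rewrite eq_sym (negbTE q'r).

have a'b : a' != b by apply/eqP => e; apply: nib; rewrite -e.
have a'c : a' != c by apply/eqP => e; apply: nic; rewrite -e.
have -> : minn #|Q| 4 = 4 by apply/minn_idPr.
apply: (card_ge (s:=[:: a'; a; b; c])).
by rewrite /= !inE !negb_or aa' a'b a'c ab ac bc.
Qed.
End Letters.

Section St.
Variables (S : finType) (L : lang S) (n : nat) (f : 'I_n -> seq S).
Hypothesis finj : forall i j, lang_eq (quot (f i) L) (quot (f j) L) -> i = j.
Hypothesis fsur : forall w, exists i, lang_eq (quot w L) (quot (f i) L).

Definition st w : 'I_n := proj1_sig (constructive_indefinite_description _ (fsur w)).
Lemma st_spec w : lang_eq (quot w L) (quot (f (st w)) L).
Proof. by rewrite /st; case: constructive_indefinite_description. Qed.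

Lemma st_eq w w' : lang_eq (quot w L) (quot w' L) -> st w = st w'.
Proof.
move=> e; apply: finj => y; have := st_spec w y; have := st_spec w' y; have := e y.
tauto.
Qed.

Lemma st_cat w x : st (w ++ x) = st (f (st w) ++ x).
Proof. by apply: st_eq => y; rewrite /quot -!catA; apply: st_spec. Qed.

Lemma st_f i : st (f i) = i.
Proof. by apply: finj => y; have := st_spec (f i) y; tauto. Qed.

Definition T x i := st (f i ++ x).
Definition Tf x : {ffun 'I_n -> 'I_n} := [ffun i => T x i].

Lemma T_nil i : T [::] i = i.
Proof. by rewrite /T cats0 st_f. Qed.

Lemma T_cat x y i : T (x ++ y) i = T y (T x i).
Proof. rewrite /T catA. exact: (st_cat (f i ++ x) y). Qed.

Lemma T_synt x y : synt_eq L x y <-> Tf x = Tf y.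
Proof.
split.
  move=> h; apply/ffunP => i; rewrite !ffunE; apply: st_eq => v.
  by rewrite /quot -!catA; apply: h.
move=> h u v.
have e : st (u ++ x) = st (u ++ y).
  by rewrite (st_cat u x) (st_cat u y); have := congr1 (fun g : {ffun 'I_n -> 'I_n} => g (st u)) h; rewrite !ffunE.
have := st_spec (u ++ x) v; have := st_spec (u ++ y) v; rewrite e /quot -!catA.
tauto.
Qed.

Lemma T_sink w0 : (forall y, L (w0 ++ y) <-> L w0) -> forall x, T x (st w0) = st w0.
Proof.
move=> h x; rewrite /T -st_cat; apply: st_eq => y; rewrite /quot -catA.
have := h (x ++ y); have := h y; tauto.
Qed.
End St.

Lemma sink_exists (S : finType) (L : lang S) n (f : 'I_n -> seq S) :
  (forall i j, lang_eq (quot (f i) L) (quot (f j) L) -> i = j) ->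
  (right_ideal L \/ prefix_closed L) -> (1 < n \/ right_ideal L) ->
  exists w0, forall y, L (w0 ++ y) <-> L w0.
Proof.
move=> finj hL hn.
have [[[w0 Lw0] hR]|nR] := classic (right_ideal L).
  exists w0 => y; split => // _; apply/(hR (w0 ++ y)); by exists w0, y.
 have hP : prefix_closed L by case: hL.
have n1 : 1 < n by case: hn.
have [w0 nw0] : exists w0, ~ L w0.
  apply: NNPP => hall.
  have : (@Ordinal n 0 (ltnW n1)) = (@Ordinal n 1 n1).
    apply: finj => y; split => _; apply: NNPP => ny; apply: hall; eexists; exact: ny.
  by move=> /(congr1 val).
exists w0 => y; split => // /hP; tauto.
Qed.

Lemma part1 (S : finType) (L : lang S) (n m : nat) :
      0 < #|S| -> 1 <= n -> kappa L n ->
      (right_ideal L \/ prefix_closed L) ->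
      sigma L m -> m <= n ^ n.-1.
Proof.
move=> _ n1 [f [finj fsur]] hL sg.
rewrite (sigma_card (T_synt finj fsur) sg).
case: (ltngtP n 1) => [|n2|n1e]; first by rewrite ltnNge n1.
- have [w0 hw0] := sink_exists finj hL (or_introl n2).
  set z := st fsur w0.
  have hz := T_sink finj fsur hw0.
  apply: (@leq_trans #|[set t : {ffun 'I_n -> 'I_n} | t z == z]|).
    apply: subset_leq_card; apply/subsetP => t; rewrite !inE => /cbP [x [_ <-]].
    by rewrite ffunE hz.
  by rewrite card_fix card_ord.
- subst n; apply: leq_trans (max_card _) _; by rewrite card_ffun card_ord.
Qed.

Lemma part3 (S : finType) (L : lang S) (n : nat) :
      0 < #|S| -> 1 <= n -> #|S| < minn n 4 ->
      (right_ideal L \/ prefix_closed L) -> kappa L n ->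
      ~ sigma L (n ^ n.-1).
Proof.
move=> S0 _ Sn hL [f [finj fsur]] sg.
have n2 : 1 < n.
  by case: n Sn {finj fsur f sg} => [|[|n]] //; rewrite minnE /=; case: #|S| S0.
have [w0 hw0] := sink_exists finj hL (or_introl n2).
set z := st fsur w0.
have hz := T_sink finj fsur hw0.
have e := sigma_card (T_synt finj fsur) sg.
have sub : Img (Tf fsur) \subset [set t : {ffun 'I_n -> 'I_n} | t z == z].
  apply/subsetP => t; rewrite !inE => /cbP [x [_ <-]].
  by rewrite ffunE hz.
have eqI : Img (Tf fsur) = [set t : {ffun 'I_n -> 'I_n} | t z == z].
  apply/eqP; by rewrite eqEcard sub card_fix card_ord e leqnn.
have := @letters_bound S 'I_n z (T fsur) (T_nil finj fsur) (T_cat finj fsur) hz.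
move=> hb.
suff /hb : forall h : 'I_n -> 'I_n, h z = z ->
    exists x, x <> [::] /\ forall q, T fsur x q = h q.
  by rewrite card_ord => /(_ n2); rewrite leqNgt Sn.
move=> h hz'.
have : [ffun i => h i] \in Img (Tf fsur) by rewrite eqI inE ffunE hz'.
rewrite inE => /cbP [x [xne ex]]; exists x; split => // q.
by have := congr1 (fun g : {ffun 'I_n -> 'I_n} => g q) ex; rewrite !ffunE.
Qed.

Definition run (S Q : Type) (act : S -> Q -> Q) (q : Q) (w : seq S) : Q :=
  foldl (fun q a => act a q) q w.

Lemma run_cat (S Q : Type) (act : S -> Q -> Q) q x y :
  run act q (x ++ y) = run act (run act q x) y.
Proof. by rewrite /run foldl_cat. Qed.

Section DFA.
Variables (S Q : finType) (act : S -> Q -> Q) (z s0 : Q).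
Hypothesis actz : forall a, act a z = z.
Hypothesis gen : forall h : Q -> Q, h z = z ->
  exists w, w <> [::] /\ forall q, run act q w = h q.
Hypothesis s0z : s0 != z.
Variable acc : Q -> bool.
Hypothesis hacc : forall q, q != z -> acc q != acc z.

Definition LD : lang S := fun w => acc (run act s0 w).

Lemma run_z w : run act z w = z.
Proof. by elim: w => //= a w IH; rewrite actz. Qed.

Lemma reach q : exists u, run act s0 u = q.
Proof.
case: (gen (h := fun r => if r == z then z else q)); first by rewrite eqxx.
by move=> w [_ hw]; exists w; rewrite hw (negbTE s0z).
Qed.

Lemma dist p q : p != q -> exists v, acc (run act p v) != acc (run act q v).
Proof.
move=> pq.
have [e|pz] := eqVneq p z.
  by exists [::] => /=; rewrite e eq_sym hacc // -e eq_sym.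
have [e|qz] := eqVneq q z; first by exists [::] => /=; rewrite e hacc // -e.
case: (gen (h := fun r => if r == p then z else r)).
  by rewrite eq_sym (negbTE pz).
move=> v [_ hv]; exists v; rewrite eq_sym in pq; rewrite !hv eqxx (negbTE pq) eq_sym.
by apply: hacc.
Qed.

Definition rw q : seq S := proj1_sig (constructive_indefinite_description _ (reach q)).
Lemma rwP q : run act s0 (rw q) = q.
Proof. by rewrite /rw; case: constructive_indefinite_description. Qed.

Lemma LD_kappa : kappa LD #|Q|.
Proof.
exists (fun i => rw (enum_val i)); split.
  move=> i j e; apply: enum_val_inj; apply/eqP/negP => /negP/dist [v].
  have := e v; rewrite /quot /LD !run_cat !rwP.
  by case: (acc _); case: (acc _) => // h; [have := proj1 h isT|have := proj2 h isT].
move=> w; exists (enum_rank (run act s0 w)) => v.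
by rewrite /quot /LD !run_cat enum_rankK rwP.
Qed.

Definition PhiD w : {ffun Q -> Q} := [ffun q => run act q w].

Lemma PhiD_synt x y : synt_eq LD x y <-> PhiD x = PhiD y.
Proof.
split; last first.
  move=> e u v; rewrite /LD !run_cat.
  by have := congr1 (fun g : {ffun Q -> Q} => g (run act s0 u)) e; rewrite !ffunE => ->.
move=> h; apply/ffunP => q; rewrite !ffunE; apply/eqP/negP => /negP/dist [v].
have [u hu] := reach q.
have := h u v; rewrite /LD !run_cat hu.
by case: (acc _); case: (acc _) => // h'; [have := proj1 h' isT|have := proj2 h' isT].
Qed.

Lemma LD_sigma : sigma LD (#|Q| ^ #|Q|.-1).
Proof.
have eI : Img PhiD = [set t : {ffun Q -> Q} | t z == z].
  apply/setP => t; rewrite !inE; apply/cbP/eqP.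
    by move=> [w [_ <-]]; rewrite ffunE run_z.
  move=> tz; case: (gen (h := fun q => t q)) => // w [wne hw].
  by exists w; split => //; apply/ffunP => q; rewrite ffunE hw.
rewrite -(card_fix z) -eI.
exact: sigma_of_card PhiD_synt.
Qed.

Lemma LD_ri : (forall q, acc q = (q == z)) -> right_ideal LD.
Proof.
move=> ha; have [u hu] := reach z.
split; first by exists u; rewrite /LD ha hu.
move=> w; split; first by move=> h; exists w, [::]; rewrite cats0.
by move=> [u' [v [-> h]]]; move: h; rewrite /LD !ha run_cat => /eqP ->; rewrite run_z.
Qed.

Lemma LD_pc : (forall q, acc q = (q != z)) -> prefix_closed LD.
Proof.
move=> ha w x; rewrite /LD !ha run_cat; apply: contra => /eqP ->.
by rewrite run_z.
Qed.
End DFA.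

Definition lift (K : finType) (p : {perm K}) (q : option K) := omap p q.
Definition merge (K : finType) (x y q : option K) := if q == x then y else q.

Lemma liftV (K : finType) (p : {perm K}) q : lift p (lift p^-1 q) = q.
Proof. by case: q => //= a; rewrite permKV. Qed.
Lemma liftVK (K : finType) (p : {perm K}) q : lift p^-1 (lift p q) = q.
Proof. by case: q => //= a; rewrite permK. Qed.

Lemma conj_merge (K : finType) (p : {perm K}) x y q :
  lift p (merge x y (lift p^-1 q)) = merge (lift p x) (lift p y) q.
Proof.
rewrite /merge; have [e|ne] := eqVneq (lift p^-1 q) x.
  by rewrite -e liftV !eqxx.
have -> : (q == lift p x) = false.
  apply/negbTE/eqP => e; apply: (negP ne); by rewrite e liftVK.
exact: liftV.
Qed.

Section Gen.
Variables (S K : finType) (act : S -> option K -> option K).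
Hypothesis actN : forall a, act a None = None.
Definition G' (h : option K -> option K) := exists w, forall q, run act q w = h q.

Lemma G'_ext g h : G' g -> (forall q, g q = h q) -> G' h.
Proof. by move=> [w hw] e; exists w => q; rewrite hw e. Qed.
Lemma G'_id : G' id.
Proof. by exists [::]. Qed.
Lemma G'_comp g h : G' g -> G' h -> G' (fun q => h (g q)).
Proof. by move=> [w1 h1] [w2 h2]; exists (w1 ++ w2) => q; rewrite run_cat h1 h2. Qed.

Hypothesis Hperm : forall p : {perm K}, G' (lift p).
Hypothesis Hd : exists a0, G' (merge (Some a0) None).
Hypothesis He : #|K| <= 1 \/ exists a1 b1, a1 != b1 /\ G' (merge (Some a1) (Some b1)).
Hypothesis Hlet : exists a (p : {perm K}), forall q, act a q = lift p q.

Lemma G'_conj p h : G' h -> G' (fun q => lift p (h (lift p^-1 q))).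
Proof. by move=> hh; apply: G'_comp (G'_comp _ hh) _. Qed.

Lemma G'_kill a : G' (merge (Some a) None).
Proof.
have [a0 h0] := Hd; apply: G'_ext (G'_conj (tperm a0 a) h0) _ => q.
by rewrite conj_merge /= tpermL.
Qed.

Lemma G'_merge a b : a != b -> G' (merge (Some a) (Some b)).
Proof.
move=> ab; case: He => [K1|[a1 [b1 [ab1 h1]]]].
  by case/negP: ab; apply/eqP; apply: (card_le1_eqP K1).
set c := tperm b1 b a1.
have cb : c != b.
  by apply/eqP => e; move: ab1; rewrite -(tpermK b1 b a1) -/c e tpermR eqxx.
pose p := (tperm b1 b * tperm c a)%g.
apply: G'_ext (G'_conj p h1) _ => q.
by rewrite conj_merge /= !permM tpermL -/c tpermL tpermD // eq_sym.
Qed.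

Lemma G'_all h : h None = None -> G' h.
Proof.
have [N] := ubnP #|[set q | h q != q]|; elim: N h => // N IH h hN hz.
case: (pickP [pred q | h q != q]) => [i /= hi | hid]; last first.
  apply: G'_ext G'_id _ => q; have := hid q; by move/negbFE/eqP.
have iN : i != None by apply: contra hi => /eqP ->; rewrite hz.
have [hinj|hninj] := classic (injective h).
- case: i iN hi => [a|//] _ hi.
  have [g hg gh] := injF_bij hinj.
  have [b hb] : exists b, h (Some b) = Some a.
    case E: (g (Some a)) => [b|]; first by exists b; rewrite -E gh.
    by move: (gh (Some a)); rewrite E hz.
  have ab : a != b.
    by apply/eqP => e; rewrite -e in hb; rewrite hb eqxx in hi.
  pose E := lift (tperm a b); pose h' := fun q => h (E q).
  have h'G : G' h'.
    apply: IH; last by rewrite /h' /E /= hz.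
    rewrite -ltnS; apply: leq_trans hN; rewrite ltnS; apply: proper_card.
    apply/properP; split.
      apply/subsetP => q; rewrite !inE; apply: contra => /eqP hq.
      rewrite /h' /E; case: q hq => [c|] hq; last by rewrite /= hz.
      have [->|ca] := eqVneq c a; first by rewrite /= tpermL hb.
      have [cb|cb] := eqVneq c b; first by move: hq; rewrite cb hb => -[e]; rewrite e eqxx in ab.
      by rewrite /= tpermD 1?eq_sym // hq.
    exists (Some a); rewrite !inE // /h' /E /= tpermL hb eqxx //.
  apply: G'_ext (G'_comp (Hperm (tperm a b)) h'G) _ => q.
  by rewrite /h' /E; case: q => //= c; rewrite tpermK.
- have [p [q [pq hpq]]] : exists p q, p != q /\ h p = h q.
    apply: NNPP => hn; apply: hninj => p q hpq; apply/eqP; apply: NNPP => pq.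
    by apply: hn; exists p, q; split => //; apply/negP.
  have [i' [j [ij [hij hii]]]] : exists i j, i != j /\ h i = h j /\ h i != i.
    have [hp|hp] := eqVneq (h p) p.
      exists q, p; split; first by rewrite eq_sym.
      by split; [rewrite hpq | rewrite -hpq hp].
    by exists p, q.
  have i'N : i' != None by apply: contra hii => /eqP ->; rewrite hz.
  pose h' := fun r => if r == i' then i' else h r.
  have EG : G' (merge i' j).
    case: i' i'N ij {hij hii h'} => [a|//] _ ij.
    case: j ij => [b|] ij; last exact: G'_kill.
    by apply: G'_merge; apply: contra ij => /eqP ->.
  have h'G : G' h'.
    apply: IH; last by rewrite /h' eq_sym (negbTE i'N) hz.
    rewrite -ltnS; apply: leq_trans hN; rewrite ltnS; apply: proper_card.
    apply/properP; split.
      apply/subsetP => r; rewrite !inE /h'.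
      by have [->|_] := eqVneq r i'; rewrite ?eqxx.
    by exists i'; rewrite inE // /h' !eqxx.
  apply: G'_ext (G'_comp EG h'G) _ => r.
  rewrite /h' /merge; have [->|ri] := eqVneq r i'.
    by rewrite eq_sym (negbTE ij) hij.
  by rewrite (negbTE ri).
Qed.

Lemma gen_all h : h None = None ->
  exists w, w <> [::] /\ forall q, run act q w = h q.
Proof.
move=> hz; have [a [p hp]] := Hlet.
have [w hw] := G'_all (h := fun q => h (lift p^-1 q)) hz.
exists (a :: w); split => // q; by rewrite /= hp hw liftVK.
Qed.
End Gen.

Import GRing.Theory.

Lemma G'_gen (S K : finType) (act : S -> option K -> option K) (A : {set {perm K}}) :
  (forall x, x \in A -> G' act (lift x)) ->
  forall p, p \in <<A>>%g -> G' act (lift p).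
Proof.
move=> hA p /gen_prodgP [m [f hf ->]].
elim: m f hf => [|m IH] f hf.
  by apply: G'_ext (G'_id act) _ => q; rewrite big_ord0; case: q => //= a; rewrite perm1.
rewrite big_ord_recr /=.
apply: G'_ext (G'_comp (IH _ (fun i => hf (widen_ord (leqnSn m) i))) (hA _ (hf ord_max))) _.
by case=> //= a; rewrite permM.
Qed.

Definition rk (S : finType) (a : S) : nat := val (enum_rank a).
Definition lett (S : finType) r (h : r < #|S|) : S := enum_val (Ordinal h).
Lemma rk_lett (S : finType) r (h : r < #|S|) : rk (lett h) = r.
Proof. by rewrite /rk /lett enum_valK. Qed.

Section Inst3.
Variables (S : finType) (j : nat).
Hypothesis hS : minn j.+3 4 <= #|S|.
Local Open Scope ring_scope.
Definition cyc : {perm 'I_j.+2} := perm (addrI (1 : 'I_j.+2)).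
Definition act3 (a : S) (q : option 'I_j.+2) : option 'I_j.+2 :=
  if rk a == 1%N then merge (Some 0) None q
  else if rk a == 2%N then merge (Some 1) (Some 0) q
  else if rk a == 3%N then lift (tperm 0 1) q
  else lift cyc q.

Lemma act3N a : act3 a None = None.
Proof. by rewrite /act3 /merge; do 3 case: ifP => //. Qed.

Lemma G1 r (h : (r < #|S|)%N) : G' act3 (act3 (lett h)).
Proof. by exists [:: lett h]. Qed.

Lemma t01c (x : 'I_j.+2) : j = 0%N -> tperm (0 : 'I_j.+2) 1 x = cyc x.
Proof.
move=> j0; rewrite /cyc [in RHS]permE.
have [->|x0] := eqVneq x 0; first by rewrite tpermL addr0.
have x1 : x = 1.
  apply/val_inj => /=; move: x0; rewrite -val_eqE /=; case: x => [[|[|k]] /=] //; rewrite j0 //.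
rewrite x1 tpermR; apply/val_inj => /=. rewrite j0. done.
Qed.

Lemma S3 : (2 < #|S|)%N.
Proof. by apply: leq_trans hS; rewrite leq_min. Qed.

Lemma gen3 h : h None = None ->
  exists w, w <> [::] /\ forall q, run act3 q w = h q.
Proof.
move: h.
have S0 : (0 < #|S|)%N by apply: ltn_trans S3.
have S1 : (1 < #|S|)%N by apply: ltn_trans S3.
have Gc : G' act3 (lift cyc).
  apply: G'_ext (G1 S0) _ => q; by rewrite /act3 rk_lett.
move=> h hz; apply: gen_all hz.
- move=> p; apply: (G'_gen (A := [set tperm 0 1; cyc])).
    move=> x; rewrite !inE => /orP [] /eqP ->; last exact: Gc.
    have [S4|S4] := ltnP 3 #|S|.
      apply: G'_ext (G1 S4) _ => q; by rewrite /act3 rk_lett.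
    have j0 : j = 0%N.
      by move: (leq_trans hS S4); case: j => // k; rewrite minnE /= subnS.
    apply: G'_ext Gc _ => -[y|] //=; by rewrite t01c.
  rewrite (gen_tpermn_circular_shift (i:=0) (j:=1)) ?inE //.
  by rewrite subr0 coprimen1.
- exists 0; apply: G'_ext (G1 S1) _ => q; by rewrite /act3 rk_lett.
- right; exists 1, 0; split => //.
  apply: G'_ext (G1 S3) _ => q; by rewrite /act3 rk_lett.
- by exists (lett S0), cyc => q; rewrite /act3 rk_lett.
Qed.
End Inst3.

Section Inst2.
Variables (S : finType).
Hypothesis hS : (1 < #|S|)%N.
Definition act2 (a : S) (q : option 'I_1) : option 'I_1 :=
  if rk a == 1%N then merge (Some ord0) None q else q.

Lemma gen2 h : h None = None ->
  exists w, w <> [::] /\ forall q, run act2 q w = h q.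
Proof.
move: h.
have S0 : (0 < #|S|)%N by apply: ltn_trans hS.
have lift1 (p : {perm 'I_1}) q : lift p q = q.
  by case: q => //= a; congr Some; rewrite [p a]ord1 [a]ord1.
move=> h hz; apply: gen_all hz.
- move=> p; apply: G'_ext (G'_id _) _ => q; by rewrite lift1.
- exists ord0; exists [:: lett hS] => q; by rewrite /= /act2 rk_lett.
- by left; rewrite card_ord.
- exists (lett S0), 1%g => q; by rewrite /act2 rk_lett lift1.
Qed.
End Inst2.

Lemma from_dfa (S Q : finType) (act : S -> Q -> Q) (z s0 : Q) n :
  (forall a, act a z = z) ->
  (forall h : Q -> Q, h z = z -> exists w, w <> [::] /\ forall q, run act q w = h q) ->
  s0 != z -> #|Q| = n ->
  (exists L : lang S, right_ideal L /\ kappa L n /\ sigma L (n ^ n.-1)) /\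
  (exists L : lang S, prefix_closed L /\ kappa L n /\ sigma L (n ^ n.-1)).
Proof.
move=> actz gen s0z <-.
have h1 : forall q, q != z -> (q == z) != (z == z).
  by move=> q qz; rewrite eqxx (negbTE qz).
have h2 : forall q, q != z -> (q != z) != (z != z).
  by move=> q qz; rewrite eqxx qz.
split.
  exists (LD act s0 (fun q => q == z)); split; first exact: (LD_ri actz gen s0z (fun q => erefl)).
  by split; [exact: (LD_kappa gen s0z h1)|exact: (LD_sigma actz gen s0z h1)].
exists (LD act s0 (fun q => q != z)); split; first exact: (LD_pc actz (fun q => erefl)).
by split; [exact: (LD_kappa gen s0z h2)|exact: (LD_sigma actz gen s0z h2)].
Qed.

Lemma part2 (S : finType) (n : nat) :
      1 <= n -> minn n 4 <= #|S| ->
      (exists L : lang S, right_ideal L /\ kappa L n /\ sigma L (n ^ n.-1)) /\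
      (exists L : lang S, prefix_closed L /\ kappa L n /\ sigma L (n ^ n.-1)).
Proof.
case: n => [//|[|[|j]]] _ hS.
- have S0 : 0 < #|S| by [].
  pose L : lang S := fun _ => True.
  have k1 : kappa L 1.
    exists (fun _ => [::]); split; first by move=> i j _; rewrite [i]ord1 [j]ord1.
    by move=> w; exists ord0.
  have s1 : sigma L 1.
    exists (fun _ => [:: lett S0]); split; [by []|split].
      by move=> i j _; rewrite [i]ord1 [j]ord1.
    by move=> w _; exists ord0.
  split; exists L; (split; [|by split]); last by [].
  split; first by exists [::].
  by move=> w; split => // _; exists w, [::]; rewrite cats0.
- apply: (@from_dfa S _ (@act2 S) None (Some ord0)) => //.
  + by move=> a; rewrite /act2 /merge; case: ifP.
  + exact: gen2.
  + by rewrite card_option card_ord.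
- apply: (@from_dfa S _ (@act3 S j) None (Some 0%R)) => //.
  + exact: act3N.
  + exact: gen3.
  + by rewrite card_option card_ord.
Qed.

Theorem theorem2 :
  (* upper bound *)
  (forall (S : finType) (L : lang S) (n m : nat),
      0 < #|S| -> 1 <= n -> kappa L n ->
      (right_ideal L \/ prefix_closed L) ->
      sigma L m -> m <= n ^ n.-1)
  /\
  (* tightness: |S| >= 1,2,3 for n = 1,2,3 and |S| >= 4 for n >= 4 *)
  (forall (S : finType) (n : nat),
      1 <= n -> minn n 4 <= #|S| ->
      (exists L : lang S, right_ideal L /\ kappa L n /\ sigma L (n ^ n.-1)) /\
      (exists L : lang S, prefix_closed L /\ kappa L n /\ sigma L (n ^ n.-1)))
  /\
  (* alphabet sizes cannot be reduced *)
  (forall (S : finType) (L : lang S) (n : nat),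
      0 < #|S| -> 1 <= n -> #|S| < minn n 4 ->
      (right_ideal L \/ prefix_closed L) -> kappa L n ->
      ~ sigma L (n ^ n.-1)).
Proof.
split; [exact: part1|split; [exact: part2|exact: part3]].
Qed.
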